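(* Let $\alpha,\beta,\gamma\in\{1,-1\}$, $u_1,\dots,u_4\in\Bbbk^\times$, and let $D(\mathfrak{D}_4)$ act on $B$ as in the context. Then the group-grade component of the homological determinant $\mathrm{hdet}_B:D(\mathfrak{D}_4)\to\Bbbk$ is trivial (i.e. $\mathrm{hdet}_B(\phi_g)=\delta_{g,e}$), and $$\mathrm{hdet}_B(r)=-\alpha\beta\gamma,\qquad \mathrm{hdet}_B(s)=-\beta\gamma.$$ In particular the homological determinant is trivial (equal to the counit) if and only if $\alpha=1$ and $\beta=-\gamma$.
   Context: Let $\Bbbk=\mathbb{C}$, $i=\sqrt{-1}$, $\mathfrak{D}_4=\langle r,s\mid r^4=e,\ s^2=r^2,\ rsrs^{-1}=e\rangle$. The Drinfeld double $D(G)$ has basis $\{\phi_gh\}$, multiplication $(\phi_g h)(\phi_{g'}h')=\delta_{g,hg'h^{-1}}\phi_g hh'$, comultiplication $\Delta(\phi_gh)=\sum_x\phi_xh\otimes\phi_{x^{-1}g}h$, counit $\epsilon(\phi_gh)=\delta_{g,e}$. A right $D(G)$-module algebra is a $G$-graded algebra with a right $G$-action by algebra automorphisms with $A_x\cdot g\subseteq A_{g^{-1}xg}$, $\phi_x$ projecting onto $A_x$. The homological determinant $\mathrm{hdet}_B$ of a Hopf action on an AS regular algebra is that of Kirkman–Kuzmanovich–Zhang; for a Koszul AS regular algebra $B$ it is the character by which $D(G)$ acts on the one-dimensional span of the twisted superpotential of $B$. The algebra $B$ is $\Bbbk\langle x_1,x_2,y_1,y_2,z_1,z_2\rangle$ modulo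 $x_1x_2-\alpha x_2x_1$, $y_1y_2-\beta y_2y_1$, $z_1z_2-\gamma z_2z_1$, $x_1y_1-u_1y_1x_2$, $x_2y_1-u_1y_1x_1$, $x_1y_2+u_1y_2x_2$, $x_2y_2+u_1y_2x_1$, $x_1z_1-iu_2z_1x_2$, $x_2z_1-iu_2z_1x_1$, $ix_1z_2-u_2z_2x_2$, $ix_2z_2-u_2z_2x_1$, $y_1z_2-u_3z_2y_1$, $y_2z_1-u_3z_1y_2$, $y_1z_1-u_4z_1y_1$, $y_2z_2-u_4z_2y_2$; it is Koszul AS regular of dimension 6. The $D(\mathfrak{D}_4)$-module algebra structure is given on generators by: $x_1$: grade $s$, $x_1\cdot r=x_2$, $x_1\cdot s=-ix_1$; $x_2$: grade $sr^2$, $x_2\cdot r=-x_1$, $x_2\cdot s=ix_2$; $y_1$: grade $sr$, $y_1\cdot r=-y_2$, $y_1\cdot s=y_2$; $y_2$: grade $sr^3$, $y_2\cdot r=-y_1$, $y_2\cdot s=y_1$; $z_1$: grade $sr$, $z_1\cdot r=-iz_2$, $z_1\cdot s=z_2$; $z_2$: grade $sr^3$, $z_2\cdot r=-iz_1$, $z_2\cdot s=-z_1$. *)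

(* Defs.v *)
From HB Require Import structures.
From mathcomp Require Import all_boot all_order all_algebra.
Set Implicit Arguments. Unset Strict Implicit. Unset Printing Implicit Defensive.
Import Order.TTheory GRing.Theory Num.Theory.
Local Open Scope ring_scope.

(* ---------- The group D_4 = <r,s | r^4 = e, s^2 = r^2, r s r s^-1 = e> ----------
   An element (a, b) : 'I_4 * bool stands for the normal form r^a s^b.
   Relations used: s r = r^-1 s (from r s r s^-1 = e) and s^2 = r^2. *)
Definition grp := ('I_4 * bool)%type.
Definition gmul (x y : grp) : grp :=
  ((x.1 + (if x.2 then - y.1 else y.1) + (if x.2 && y.2 then 2%:R else 0))%R,
   x.2 (+) y.2).
Definition ge : grp := (0%R, false).
Definition gr : grp := (1%R, false).
Definition gs : grp := (0%R, true).

Definition gen := 'I_6.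
Definition x1 : gen := inord 0.
Definition x2 : gen := inord 1.
Definition y1 : gen := inord 2.
Definition y2 : gen := inord 3.
Definition z1 : gen := inord 4.
Definition z2 : gen := inord 5.

(* G-grade of each generator, in normal form r^a s^b:
   x1 : s, x2 : s r^2 = r^2 s, y1 : s r = r^3 s, y2 : s r^3 = r s,
   z1 : s r = r^3 s, z2 : s r^3 = r s. *)
Definition lgrade (j : gen) : grp :=
  match val j with
  | 0 => (0%R, true)
  | 1 => (2%:R, true)
  | 2 => (3%:R, true)
  | 3 => (1%R, true)
  | 4 => (3%:R, true)
  | _ => (1%R, true)
  end.

(* ---------- degree-6 tensors V^{(x)6}, V = span(x1,...,z2) ----------
   A tensor is given by its coordinates on the basis of pure tensors
   e_{t 0} (x) ... (x) e_{t 5}, indexed by words t. *)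
Definition word := {ffun 'I_6 -> gen}.

Section Tensors.
Variable C : numClosedFieldType.

Definition tensor := word -> C.
Definition tzero : tensor := fun _ => 0.
Definition tscale (c : C) (f : tensor) : tensor := fun t => c * f t.

(* quadratic elements of V (x) V, given as (coefficient, first letter, second letter) *)
Definition quad (s : seq (C * gen * gen)) : gen -> gen -> C :=
  fun a b => \sum_(p <- s) (if (p.1.2 == a) && (p.2 == b) then p.1.1 else 0).

Definition B_rels (al be ga u1 u2 u3 u4 : C) : seq (gen -> gen -> C) :=
  [:: quad [:: (1, x1, x2); (- al, x2, x1)];
      quad [:: (1, y1, y2); (- be, y2, y1)];
      quad [:: (1, z1, z2); (- ga, z2, z1)];
      quad [:: (1, x1, y1); (- u1, y1, x2)];
      quad [:: (1, x2, y1); (- u1, y1, x1)];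
      quad [:: (1, x1, y2); (u1, y2, x2)];
      quad [:: (1, x2, y2); (u1, y2, x1)];
      quad [:: (1, x1, z1); (- ('i * u2), z1, x2)];
      quad [:: (1, x2, z1); (- ('i * u2), z1, x1)];
      quad [:: ('i, x1, z2); (- u2, z2, x2)];
      quad [:: ('i, x2, z2); (- u2, z2, x1)];
      quad [:: (1, y1, z2); (- u3, z2, y1)];
      quad [:: (1, y2, z1); (- u3, z1, y2)];
      quad [:: (1, y1, z1); (- u4, z1, y1)];
      quad [:: (1, y2, z2); (- u4, z2, y2)] ].

(* f lies in V^{(x)i} (x) R (x) V^{(x)(4-i)}, R = span rels, written in
   coordinates: f(t) = sum_k c_k(t outside positions i,i+1) * rel_k(t_i, t_{i+1}). *)
Definition in_VRV (rels : seq (gen -> gen -> C)) (i : nat) (f : tensor) : Prop :=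
  exists c : word -> nat -> C,
    (forall t t' : word,
        (forall p : 'I_6, (val p != i) && (val p != i.+1) -> t p = t' p) ->
        c t = c t') /\
    forall t : word,
      f t = \sum_(k < size rels)
              c t k * nth (fun _ _ => 0) rels k (t (inord i)) (t (inord i.+1)).

(* The space spanned by the (twisted) superpotential of the Koszul AS regular
   algebra T(V)/(R) of global dimension 6:
   W = \bigcap_{i=0}^{4} V^{(x)i} (x) R (x) V^{(x)(4-i)} inside V^{(x)6}. *)
Definition superpot_space (rels : seq (gen -> gen -> C)) (f : tensor) : Prop :=
  forall i, (i <= 4)%N -> in_VRV rels i f.

(* Right action of r and s on V: e_j . g = (img j).1 * e_{(img j).2} *)
Definition lin_of (img : gen -> C * gen) : gen -> gen -> C :=
  fun j k => if (img j).2 == k then (img j).1 else 0.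

Definition img_r (j : gen) : C * gen :=
  match val j with
  | 0 => (1, x2)
  | 1 => (-1, x1)
  | 2 => (-1, y2)
  | 3 => (-1, y1)
  | 4 => (- 'i, z2)
  | _ => (- 'i, z1)
  end.

Definition img_s (j : gen) : C * gen :=
  match val j with
  | 0 => (- 'i, x1)
  | 1 => ('i, x2)
  | 2 => (1, y2)
  | 3 => (1, y1)
  | 4 => (1, z2)
  | _ => (-1, z1)
  end.

(* diagonal action (Delta(h) = h (x) ... (x) h) of a linear map M on V^{(x)6}:
   (f . M)(t) = sum_s f(s) prod_p M (s p) (t p) *)
Definition act (M : gen -> gen -> C) (f : tensor) : tensor :=
  fun t => \sum_(s : word) f s * \prod_(p : 'I_6) M (s p) (t p).

(* action of the group element r^a s^b (right action: first r a times, then s) *)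
Definition act_el (h : grp) (f : tensor) : tensor :=
  iter h.2 (act (lin_of img_s)) (iter (val h.1) (act (lin_of img_r)) f).

Definition wgrade (t : word) : grp :=
  foldl gmul ge [seq lgrade (t p) | p <- enum 'I_6].

(* action of phi_g: projection onto the grade-g component *)
Definition proj (g : grp) (f : tensor) : tensor :=
  fun t => if wgrade t == g then f t else 0.

(* action of phi_g h in D(G) on the right: f . (phi_g h) = (f . phi_g) . h *)
Definition dact (g h : grp) (f : tensor) : tensor := act_el h (proj g f).

End Tensors.

(* Main.v *)
Require Import Defs.
From HB Require Import structures.
From mathcomp Require Import all_boot all_order all_algebra ring zify.
From Stdlib Require Import FunctionalExtensionality.
Set Implicit Arguments. Unset Strict Implicit. Unset Printing Implicit Defensive.
Import Order.TTheory GRing.Theory Num.Theory.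

Record mon := Mon { mi : nat; ma : nat; mb : nat; mg : nat;
                    m1 : int; m2 : int; m3 : int; m4 : int }.
Definition mone := Mon 0 0 0 0 0 0 0 0.
Definition mmul (m n : mon) : mon :=
  Mon (mi m + mi n) (ma m + ma n) (mb m + mb n) (mg m + mg n)
      (m1 m + m1 n)%R (m2 m + m2 n)%R (m3 m + m3 n)%R (m4 m + m4 n)%R.
Definition minv (m : mon) : mon :=
  Mon (3 * mi m) (ma m) (mb m) (mg m) (- m1 m)%R (- m2 m)%R (- m3 m)%R (- m4 m)%R.
Definition meq (m n : mon) : bool :=
  [&& mi m %% 4 == mi n %% 4, ma m %% 2 == ma n %% 2, mb m %% 2 == mb n %% 2,
      mg m %% 2 == mg n %% 2, m1 m == m1 n, m2 m == m2 n, m3 m == m3 n & m4 m == m4 n].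

(* relation k = p * a b + q * c d *)
Definition M1 := Mon 0 0 0 0 0 0 0 0.
Definition Mal := Mon 2 1 0 0 0 0 0 0.
Definition Mbe := Mon 2 0 1 0 0 0 0 0.
Definition Mga := Mon 2 0 0 1 0 0 0 0.
Definition Mnu1 := Mon 2 0 0 0 1 0 0 0.
Definition Mu1 := Mon 0 0 0 0 1 0 0 0.
Definition Miu2 := Mon 3 0 0 0 0 1 0 0.
Definition Mi := Mon 1 0 0 0 0 0 0 0.
Definition Mnu2 := Mon 2 0 0 0 0 1 0 0.
Definition Mnu3 := Mon 2 0 0 0 0 0 1 0.
Definition Mnu4 := Mon 2 0 0 0 0 0 0 1.

Definition relsym : seq (nat * nat * mon * nat * nat * mon) :=
  [:: (0,1,M1,1,0,Mal); (2,3,M1,3,2,Mbe); (4,5,M1,5,4,Mga);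
      (0,2,M1,2,1,Mnu1); (1,2,M1,2,0,Mnu1); (0,3,M1,3,1,Mu1); (1,3,M1,3,0,Mu1);
      (0,4,M1,4,1,Miu2); (1,4,M1,4,0,Miu2); (0,5,Mi,5,1,Mnu2); (1,5,Mi,5,0,Mnu2);
      (2,5,M1,5,2,Mnu3); (3,4,M1,4,3,Mnu3); (2,4,M1,4,2,Mnu4); (3,5,M1,5,3,Mnu4)]%N.

Definition dflt := (0,0,M1,0,0,M1)%N.

Fixpoint stepk (k : nat) (rs : seq (nat * nat * mon * nat * nat * mon)) (a b : nat)
  : option (nat * nat * nat * mon * mon) :=
  match rs with
  | [::] => None
  | (a',b',p,c',d',q) :: rs' =>
      if (a' == a) && (b' == b) then Some (k, c', d', p, q)
      else if (c' == a) && (d' == b) then Some (k, a', b', q, p)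
      else stepk k.+1 rs' a b
  end.
Definition step a b := stepk 0 relsym a b.

Definition set2 (l : seq nat) (j c d : nat) := set_nth 0%N (set_nth 0%N l j c) j.+1 d.

Definition outord (a b : nat) : bool :=
  (a./2 > b./2)%N || ((a./2 == b./2) && (a > b)%N).
Definition bad (l : seq nat) (j : nat) : bool :=
  (nth 0%N l j == nth 0%N l j.+1) || outord (nth 0%N l j) (nth 0%N l j.+1).

Inductive res := Zero | Val of mon | Fail.

Fixpoint normf (n : nat) (l : seq nat) : res :=
  let j := find (bad l) (iota 0 5) in
  if (j < 5)%N then
    match n with
    | 0 => Fail
    | n'.+1 =>
      match step (nth 0%N l j) (nth 0%N l j.+1) with
      | None => Zero
      | Some (k, c, d, p, q) =>
        match normf n' (set2 l j c d) with
        | Val m => Val (mmul (mmul p (minv q)) m)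
        | r => r
        end
      end
    end
  else if l == [:: 0; 1; 2; 3; 4; 5]%N then Val mone else Fail.

Definition nrm l := normf 40 l.

Definition allL (P : seq nat -> bool) : bool :=
  all (fun a0 => all (fun a1 => all (fun a2 => all (fun a3 => all (fun a4 => all (fun a5 =>
    P [:: a0; a1; a2; a3; a4; a5]) (iota 0 6)) (iota 0 6)) (iota 0 6)) (iota 0 6)) (iota 0 6)) (iota 0 6).

Definition C1 (l : seq nat) : bool :=
  let r := nrm l in
  all (fun j =>
    match step (nth 0%N l j) (nth 0%N l j.+1) with
    | None => if r is Zero then true else false
    | Some (k, c, d, p, q) =>
      match r, nrm (set2 l j c d) with
      | Zero, Zero => true
      | Val m, Val m' => meq (mmul q m) (mmul p m')
      | _, _ => false
      end
    end) (iota 0 5).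


Definition preR (n : nat) : nat := match n with 0 => 1 | 1 => 0 | 2 => 3 | 3 => 2 | 4 => 5 | _ => 4 end%N.
Definition preS (n : nat) : nat := match n with 0 => 0 | 1 => 1 | 2 => 3 | 3 => 2 | 4 => 5 | _ => 4 end%N.
Definition lamR (n : nat) : mon := match n with 0 => M1 | 1 | 2 | 3 => Mon 2 0 0 0 0 0 0 0 | _ => Mon 3 0 0 0 0 0 0 0 end.
Definition lamS (n : nat) : mon := match n with 0 => Mon 3 0 0 0 0 0 0 0 | 1 => Mi | 2 | 3 | 4 => M1 | _ => Mon 2 0 0 0 0 0 0 0 end.
Definition lamL (lam : nat -> mon) (pre : nat -> nat) (l : seq nat) : mon :=
  foldr (fun a acc => mmul (lam (pre a)) acc) mone l.
Definition cR := Mon 2 1 1 1 0 0 0 0.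
Definition cS := Mon 2 0 1 1 0 0 0 0.
Definition C3 (lam : nat -> mon) (pre : nat -> nat) (c : mon) (l : seq nat) : bool :=
  match nrm (map pre l), nrm l with
  | Zero, Zero => true
  | Val ks, Val k => meq (mmul ks (lamL lam pre l)) (mmul c k)
  | _, _ => false
  end.

Definition lgradeN (n : nat) : grp :=
  match n with
  | 0 => (0%R, true)
  | 1 => ((2%:R)%R, true)
  | 2 => ((3%:R)%R, true)
  | 3 => (1%R, true)
  | 4 => ((3%:R)%R, true)
  | _ => (1%R, true)
  end%N.
Definition wgradeL (l : seq nat) : grp := foldl gmul ge (map lgradeN l).
Definition C2 (l : seq nat) : bool := if nrm l is Val _ then wgradeL l == ge else true.
Definition C0 (l : seq nat) : bool := if nrm l is Fail then false else true.

Definition monE (m n : mon) : bool := meq m n.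
Definition stepchk (a b : nat) : bool :=
  match step a b with
  | None => a == b
  | Some (k, c, d, p, q) =>
    [&& (k < 15)%N, (c < 6)%N, (d < 6)%N, a != b &
      match step c d with
      | Some (k', a', b', q', p') => [&& k' == k, a' == a, b' == b, meq q q' & meq p p']
      | None => false
      end]
  end.
Definition repa (k : nat) := (nth dflt relsym k).1.1.1.1.1.
Definition repb (k : nat) := (nth dflt relsym k).1.1.1.1.2.
Definition repp (k : nat) := (nth dflt relsym k).1.1.1.2.
Definition repchk (a b : nat) : bool :=
  match step a b with
  | None => true
  | Some (k, c, d, p, q) =>
    [&& (repa k < 6)%N, (repb k < 6)%N &
    ([&& repa k == a, repb k == b & meq p (repp k)] ||
     [&& repa k == c, repb k == d & meq q (repp k)])]
  end.
Definition pairchk (P : nat -> nat -> bool) :=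
  all (fun a => all (fun b => P a b) (iota 0 6)) (iota 0 6).
Lemma stepchk_ok : pairchk stepchk. Proof. by vm_compute. Qed.
Lemma repchk_ok : pairchk repchk. Proof. by vm_compute. Qed.
Lemma C0_ok : allL C0. Proof. by vm_compute. Qed.
Lemma C2_ok : allL C2. Proof. by vm_compute. Qed.
Lemma C1_ok : allL C1. Proof. by vm_compute. Qed.
Lemma C3r_ok : allL (C3 lamR preR cR). Proof. by vm_compute. Qed.
Lemma C3s_ok : allL (C3 lamS preS cS). Proof. by vm_compute. Qed.
Lemma nrm0 : nrm [:: 0; 1; 2; 3; 4; 5]%N = Val mone. Proof. by vm_compute. Qed.

Section Main.
Local Open Scope ring_scope.
Variables (C : numClosedFieldType) (al be ga u1 u2 u3 u4 : C).
Hypotheses (hal : al = 1 \/ al = -1) (hbe : be = 1 \/ be = -1) (hga : ga = 1 \/ ga = -1)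
  (hu1 : u1 != 0) (hu2 : u2 != 0) (hu3 : u3 != 0) (hu4 : u4 != 0).

Definition interp (m : mon) : C :=
  'i ^+ (mi m %% 4) * al ^+ (ma m %% 2) * be ^+ (mb m %% 2) * ga ^+ (mg m %% 2) *
  u1 ^ m1 m * u2 ^ m2 m * u3 ^ m3 m * u4 ^ m4 m.

Lemma sq1 (x : C) : (x = 1 \/ x = -1) -> x ^+ 2 = 1.
Proof. by case=> ->; rewrite ?sqrrN expr1n. Qed.
Lemma neq01 (x : C) : (x = 1 \/ x = -1) -> x != 0.
Proof. by case=> ->; rewrite ?oppr_eq0 oner_eq0. Qed.
Lemma i4 : 'i ^+ 4 = 1 :> C.
Proof. by rewrite (exprM _ 2 2) sqrCi sqrrN expr1n. Qed.

Lemma interpE m : interp m = 'i ^+ mi m * al ^+ ma m * be ^+ mb m * ga ^+ mg m *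
  u1 ^ m1 m * u2 ^ m2 m * u3 ^ m3 m * u4 ^ m4 m.
Proof. by rewrite /interp !expr_mod ?i4 ?sq1. Qed.

Lemma interp_meq m n : meq m n -> interp m = interp n.
Proof.
by move=> /and4P[/eqP e1 /eqP e2 /eqP e3 /and5P[/eqP e4 /eqP e5 /eqP e6 /eqP e7 /eqP e8]];
  rewrite /interp e1 e2 e3 e4 e5 e6 e7 e8.
Qed.

Lemma interp_mul m n : interp (mmul m n) = interp m * interp n.
Proof. rewrite !interpE /= !exprD !expfzDr //; ring. Qed.

Lemma interp_neq0 m : interp m != 0.
Proof.
have ha := neq01 hal; have hb := neq01 hbe; have hg := neq01 hga.
by rewrite /interp; repeat apply: mulf_neq0; rewrite ?expfz_neq0 // expf_neq0 // neq0Ci.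
Qed.

Lemma interp_inv m : interp (minv m) * interp m = 1.
Proof.
rewrite -interp_mul interpE /= -mulSnr !addnn -!mul2n !exprM i4 !sq1 // !expr1n.
by rewrite !addNr !expr0z !mulr1.
Qed.

Lemma interp_one : interp mone = 1.
Proof. by rewrite interpE /= !expr0z !mulr1. Qed.

Lemma ieq i j : (i < 6)%N -> (j < 6)%N -> (inord i == inord j :> 'I_6) = (i == j).
Proof. by move=> hi hj; rewrite -(inj_eq val_inj) /= !inordK. Qed.

Lemma i3 : 'i ^+ 3 = - 'i :> C.
Proof. by rewrite exprS sqrCi mulrN1. Qed.

Lemma rel_eval (f : nat -> C) a b : (a < 6)%N -> (b < 6)%N ->
  \sum_(k < size (B_rels al be ga u1 u2 u3 u4))
     f k * nth (fun _ _ => 0) (B_rels al be ga u1 u2 u3 u4) k (inord a) (inord b) =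
  if step a b is Some (k, c, d, p, q) then f k * interp p else 0.
Proof.
move=> ha hb; rewrite /= !big_ord_recl big_ord0 /=.
rewrite /quad !big_cons !big_nil /= /x1 /x2 /y1 /y2 /z1 /z2 !ieq //.
case: a ha => [|[|[|[|[|[|a]]]]]] ha //; case: b hb => [|[|[|[|[|[|b]]]]]] hb //.
all: rewrite /bump /= ?interpE /= ?expr0z ?expr1z ?sqrCi ?i3 ?expr1 ?expr0; ring.
Qed.

Definition valid (l : seq nat) := (size l == 6)%N && all (fun a => a < 6)%N l.
Definition word_of (l : seq nat) : word := [ffun p : 'I_6 => inord (nth 0%N l p)].
Lemma tup_ex : { f : word -> seq nat |
  forall t, f t = [seq nat_of_ord (t (inord j)) | j <- iota 0 6] }.
Proof. by exists (fun t => [seq nat_of_ord (t (inord j)) | j <- iota 0 6]). Qed.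
Definition tup := sval tup_ex.
Lemma tupE t : tup t = [seq nat_of_ord (t (inord j)) | j <- iota 0 6].
Proof. exact: (svalP tup_ex t). Qed.
Lemma size_tup t : size (tup t) = 6%N.
Proof. by rewrite tupE size_map size_iota. Qed.
Definition l0 := [:: 0; 1; 2; 3; 4; 5]%N.

Lemma pairchkP P : pairchk P -> forall a b, (a < 6)%N -> (b < 6)%N -> P a b.
Proof.
move=> /allP H a b ha hb.
have /H/allP : a \in iota 0 6 by rewrite mem_iota.
by apply; rewrite mem_iota.
Qed.

Lemma allLP P : allL P -> forall l, valid l -> P l.
Proof.
move=> H l /andP[/eqP hs ha].
case: l hs ha => [|a0 [|a1 [|a2 [|a3 [|a4 [|a5 [|? ?]]]]]]] //= _.
case/and5P=> h0 h1 h2 h3 /andP[h4 /andP[h5 _]].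
move: H; rewrite /allL => /allP/(_ a0); rewrite mem_iota h0 => /(_ isT).
move=> /allP/(_ a1); rewrite mem_iota h1 => /(_ isT).
move=> /allP/(_ a2); rewrite mem_iota h2 => /(_ isT).
move=> /allP/(_ a3); rewrite mem_iota h3 => /(_ isT).
move=> /allP/(_ a4); rewrite mem_iota h4 => /(_ isT).
by move=> /allP/(_ a5); rewrite mem_iota h5 => /(_ isT).
Qed.

Lemma nth_valid l j : valid l -> (j < 6)%N -> (nth 0%N l j < 6)%N.
Proof.
by case/andP=> /eqP hs /(all_nthP 0%N) H hj; apply: H; rewrite hs.
Qed.

Lemma tup_valid t : valid (tup t).
Proof. by rewrite /valid tupE /= !ltn_ord. Qed.

Lemma nth_tup t j : (j < 6)%N -> nth 0%N (tup t) j = nat_of_ord (t (inord j)).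
Proof. by move=> hj; rewrite tupE (nth_map 0%N) ?size_iota // nth_iota. Qed.

Lemma tupK t : word_of (tup t) = t.
Proof. by apply/ffunP=> p; rewrite ffunE nth_tup // !inord_val. Qed.

Lemma word_of_nth l j : (j < 6)%N -> word_of l (inord j) = inord (nth 0%N l j).
Proof. by move=> hj; rewrite ffunE inordK. Qed.

Lemma word_ofK l : valid l -> tup (word_of l) = l.
Proof.
move=> hl; have /andP[/eqP hs _] := hl.
apply: (@eq_from_nth _ 0%N); first by rewrite size_tup hs.
move=> j; rewrite size_tup => hj.
by rewrite nth_tup // word_of_nth //= inordK // nth_valid.
Qed.

Lemma valid_set2 l j c d : valid l -> (j < 5)%N -> (c < 6)%N -> (d < 6)%N ->
  valid (set2 l j c d).
Proof.
move=> hl hj hc hd; have /andP[/eqP hs _] := hl.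
apply/andP; split; first by rewrite !size_set_nth hs; apply/eqP; lia.
apply/(all_nthP 0%N) => i; rewrite !size_set_nth hs => hi.
rewrite nth_set_nth /=; case: ifP => _ //; rewrite nth_set_nth /=; case: ifP => _ //.
by apply: nth_valid; lia.
Qed.

Lemma nth_set2 l j c d i : nth 0%N (set2 l j c d) i =
  if i == j.+1 then d else if i == j then c else nth 0%N l i.
Proof. by rewrite /set2 nth_set_nth /= nth_set_nth. Qed.

Lemma step_lt a b k c d p q : step a b = Some (k, c, d, p, q) -> (a < 6)%N -> (b < 6)%N ->
  [/\ (k < 15)%N, (c < 6)%N, (d < 6)%N &
     exists p' q', [/\ step c d = Some (k, a, b, q', p'), meq q q' & meq p p']].
Proof.
move=> hs ha hb; have := pairchkP stepchk_ok ha hb; rewrite /stepchk hs.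
case/and5P=> -> -> -> _; case: (step c d) => [[[[[k' a'] b'] q'] p']|] //.
case/and5P=> /eqP -> /eqP -> /eqP -> h1 h2; split=> //; exists p', q'; by split.
Qed.

Lemma step_none a b : step a b = None -> (a < 6)%N -> (b < 6)%N -> a = b.
Proof.
by move=> hs ha hb; have := pairchkP stepchk_ok ha hb; rewrite /stepchk hs => /eqP.
Qed.

Section WW.
Variable w : tensor C.
Hypothesis Hw : superpot_space (B_rels al be ga u1 u2 u3 u4) w.

Lemma stepW l j : valid l -> (j < 5)%N ->
  match step (nth 0%N l j) (nth 0%N l j.+1) with
  | None => w (word_of l) = 0
  | Some (k, c, d, p, q) =>
      interp q * w (word_of l) = interp p * w (word_of (set2 l j c d))
  end.
Proof.
move=> hl hj; have [cf [Hout Hsum]] := Hw (ltnSE hj).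
have hj6 : (j < 6)%N by apply: ltnW.
have ha := nth_valid hl (ltnW hj); have hb := nth_valid (j:=j.+1) hl hj.
have Ht := Hsum (word_of l); rewrite !word_of_nth // in Ht.
rewrite (rel_eval (cf (word_of l))) // in Ht.
case Hs: (step _ _) Ht => [[[[[k c] d] p] q]|] // Ht.
have [hk hc hd [p' [q' [Hs' e1 e2]]]] := step_lt Hs ha hb.
have hl' := valid_set2 hl hj hc hd.
have Ht' := Hsum (word_of (set2 l j c d)); rewrite !word_of_nth // in Ht'.
rewrite !nth_set2 eqxx (ltn_eqF (ltnSn j)) eqxx in Ht'.
rewrite (rel_eval (cf (word_of (set2 l j c d)))) // Hs' in Ht'.
have Hc : cf (word_of (set2 l j c d)) = cf (word_of l).
  apply: Hout => x /andP[h1 h2]; rewrite !ffunE nth_set2.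
  by rewrite (negbTE h1) (negbTE h2).
rewrite Ht Ht' Hc (interp_meq e1); ring.
Qed.

Lemma normfW n l : valid l ->
  match normf n l with
  | Zero => w (word_of l) = 0
  | Val m => w (word_of l) = interp m * w (word_of l0)
  | Fail => True
  end.
Proof.
elim: n l => [|n IH] l hl /=.
  case: ifP => // _; case: ifP => // /eqP ->; by rewrite interp_one mul1r.
set j := find (bad l) (iota 0 5).
case: ifP => hj; last first.
  case: ifP => // /eqP ->; by rewrite interp_one mul1r.
have := stepW hl hj.
have ha := nth_valid hl (ltnW hj); have hb := nth_valid (j:=j.+1) hl hj.
case Hs: (step _ _) => [[[[[k c] d] p] q]|] // H.
have [hk hc hd _] := step_lt Hs ha hb.
have := IH _ (valid_set2 hl hj hc hd).
case: (normf n _) => // [H0|m Hm].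
  apply/eqP; move: H; rewrite H0 mulr0 => /eqP; rewrite mulf_eq0.
  by rewrite (negbTE (interp_neq0 _)).
rewrite !interp_mul -[w (word_of l)]mul1r -(interp_inv q) -mulrA H Hm; ring.
Qed.

Lemma uniqW t : w t = match nrm (tup t) with
  | Val m => interp m * w (word_of l0) | _ => 0 end.
Proof.
rewrite -{1}(tupK t); have := normfW 40 (tup_valid t).
have := allLP C0_ok (tup_valid t); rewrite /C0 /nrm.
by case: (normf 40 (tup t)).
Qed.

End WW.

Definition w0 : tensor C := fun t => match nrm (tup t) with Val m => interp m | _ => 0 end.

Lemma w0_word l : valid l -> w0 (word_of l) = match nrm l with Val m => interp m | _ => 0 end.
Proof. by move=> hl; rewrite /w0 word_ofK. Qed.

Lemma set2_same l j : valid l -> (j < 5)%N -> set2 l j (nth 0%N l j) (nth 0%N l j.+1) = l.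
Proof.
move=> /andP[/eqP hs _] hj; apply: (@eq_from_nth _ 0%N).
  by rewrite !size_set_nth hs; lia.
by move=> m _; rewrite nth_set2; case: eqP => [->|_] //; case: eqP => [->|].
Qed.

Lemma C1_at (t : word) i : (i < 5)%N ->
  match step (nat_of_ord (t (inord i))) (nat_of_ord (t (inord i.+1))) with
  | None => if nrm (tup t) is Zero then true else false
  | Some (k, c, d, p, q) =>
      match nrm (tup t), nrm (set2 (tup t) i c d) with
      | Zero, Zero => true
      | Val m, Val m' => meq (mmul q m) (mmul p m')
      | _, _ => false
      end
  end.
Proof.
move=> hi; have := allLP C1_ok (tup_valid t); rewrite /C1; cbv zeta.
move=> /allP/(_ i); rewrite mem_iota add0n leq0n hi => /(_ isT).
by rewrite !nth_tup //; apply: ltnW.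
Qed.

Lemma w0_in : superpot_space (B_rels al be ga u1 u2 u3 u4) w0.
Proof.
move=> i hi.
exists (fun t k => w0 (word_of (set2 (tup t) i (repa k) (repb k))) / interp (repp k)).
split.
  move=> t t' H; apply: functional_extensionality => k.
  have -> // : set2 (tup t) i (repa k) (repb k) = set2 (tup t') i (repa k) (repb k).
  apply: (@eq_from_nth _ 0%N); first by rewrite !size_set_nth !size_tup.
  move=> m _; rewrite !nth_set2; case: ifP => // h1; case: ifP => // h2.
  case: (ltnP m 6) => hm; last by rewrite !nth_default ?size_tup.
  rewrite !nth_tup //; congr val; apply: H; rewrite /= inordK // h1 h2 //.
move=> t.
have hi5 : (i < 5)%N by [].
have hi6 : (i < 6)%N by apply: ltnW.
have ha : (nat_of_ord (t (inord i)) < 6)%N by apply: ltn_ord.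
have hb : (nat_of_ord (t (inord i.+1)) < 6)%N by apply: ltn_ord.
rewrite -[t (inord i)]inord_val -[t (inord i.+1)]inord_val.
have E := rel_eval (fun k => w0 (word_of (set2 (tup t) i (repa k) (repb k))) / interp (repp k)) ha hb.
cbv beta in E; rewrite E; clear E.
have := C1_at t hi5.
have := pairchkP repchk_ok ha hb; rewrite /repchk.
case Hs: (step _ _) => [[[[[k c] d] p] q]|]; last first.
  by move=> _; rewrite /w0; case: (nrm (tup t)).
case/and3P=> hra hrb /orP[/and3P[/eqP ea /eqP eb em]|/and3P[/eqP ec /eqP ed em]] H.
  rewrite ea eb -!nth_tup // set2_same ?tup_valid // tupK -(interp_meq em).
  by rewrite divfK ?interp_neq0.
have [hk hc hd _] := step_lt Hs ha hb.
rewrite ec ed w0_word ?valid_set2 ?tup_valid // -(interp_meq em).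
move: H; rewrite /w0; case: (nrm (tup t)) => [|m|] //; case: (nrm _) => [|m'|] //.
  by move=> _; rewrite !mul0r.
move/interp_meq; rewrite !interp_mul => E.
apply: (mulfI (interp_neq0 q)); rewrite E.
by field; exact: interp_neq0.
Qed.

Lemma w0_l0 : w0 (word_of l0) = 1.
Proof. by rewrite w0_word // nrm0 interp_one. Qed.

Lemma wgradeE t : wgrade t = wgradeL (tup t).
Proof.
rewrite /wgrade /wgradeL tupE -map_comp -val_enum_ord -map_comp; congr foldl.
by apply: eq_map => p /=; rewrite inord_val.
Qed.

Lemma C2P l m : valid l -> nrm l = Val m -> wgradeL l = ge.
Proof. by move=> hl e; have := allLP C2_ok hl; rewrite /C2 e => /eqP. Qed.

Lemma C0P l : valid l -> nrm l <> Fail.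
Proof. by move=> hl e; have := allLP C0_ok hl; rewrite /C0 e. Qed.

Lemma part2pt w : superpot_space (B_rels al be ga u1 u2 u3 u4) w ->
  forall (g : grp) t, (if wgrade t == g then w t else 0) = (if g == ge then w t else 0).
Proof.
move=> Hw g t.
rewrite (uniqW Hw t).
case E: (nrm (tup t)) => [|m|]; last by case: (C0P (tup_valid t) E).
  by case: ifP; case: ifP.
rewrite wgradeE (C2P (tup_valid t) E).
case: (ge =P g) => [<-|ne]; first by rewrite eqxx.
have hf' : (g == ge) = false by apply/eqP => /esym /ne.
by rewrite hf'.
Qed.



Lemma part2 w : superpot_space (B_rels al be ga u1 u2 u3 u4) w ->
  forall g : grp, proj g w = if g == ge then w else tzero C.
Proof.
move=> Hw g; apply: functional_extensionality => t.
rewrite /proj part2pt //; by case: (g == ge).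
Qed.

Lemma act_lin (img : gen -> C * gen) (pre : gen -> gen) (f : tensor C) (t : word) :
  (forall j g, ((img j).2 == g) = (j == pre g)) ->
  act (lin_of img) f t = f [ffun p => pre (t p)] * \prod_(p : 'I_6) (img (pre (t p))).1.
Proof.
move=> Hp; rewrite /act (bigD1 [ffun p => pre (t p)]) //=.
rewrite [X in _ + X = _]big1 ?addr0.
  congr (_ * _); apply: eq_bigr => p _; rewrite /lin_of ffunE.
  by rewrite Hp eqxx.
move=> s hs.
have [/existsP [p hp]|/existsPn H] := boolP [exists p, s p != pre (t p)].
  by rewrite (bigD1 p) //= /lin_of Hp (negbTE hp) mul0r mulr0.
exfalso; move: hs; suff -> : s = [ffun p => pre (t p)] by rewrite eqxx.
by apply/ffunP => p; rewrite ffunE; apply/eqP; move: (H p); rewrite negbK.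
Qed.

Lemma interp_lamL lam pre l :
  interp (lamL lam pre l) = \prod_(a <- l) interp (lam (pre a)).
Proof.
elim: l => [|a l IH] /=; first by rewrite big_nil interp_one.
by rewrite big_cons interp_mul IH.
Qed.

Lemma C3P lam pre c l : allL (C3 lam pre c) -> valid l ->
  (nrm (map pre l) = Zero /\ nrm l = Zero) \/
  exists ks k, [/\ nrm (map pre l) = Val ks, nrm l = Val k &
                   meq (mmul ks (lamL lam pre l)) (mmul c k)].
Proof.
move=> H hl; have := allLP H hl; rewrite /C3.
case: (nrm (map pre l)) => [|ks|]; case: (nrm l) => [|k|] // E.
  by left.
by right; exists ks, k.
Qed.

Lemma eigen (img : gen -> C * gen) (preN : nat -> nat) (lam : nat -> mon) (c : mon) w :
  superpot_space (B_rels al be ga u1 u2 u3 u4) w ->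
  (forall j g : gen, ((img j).2 == g) = (j == inord (preN g))) ->
  (forall j : gen, (img j).1 = interp (lam j)) ->
  (forall n, (preN n < 6)%N) ->
  allL (C3 lam preN c) ->
  act (lin_of img) w = tscale (interp c) w.
Proof.
move=> Hw Hp Hl Hn Hc; apply: functional_extensionality => t.
rewrite (@act_lin _ (fun g => inord (preN g))) //.
set s := [ffun p => _].
have Hs : tup s = map preN (tup t).
  apply: (@eq_from_nth _ 0%N); first by rewrite size_map !size_tup.
  move=> j; rewrite size_tup => hj.
  by rewrite (nth_map 0%N) ?size_tup // !nth_tup // ffunE inordK.
have Hprod : \prod_(p < 6) (img (inord (preN (t p)))).1 = interp (lamL lam preN (tup t)).
  rewrite interp_lamL tupE big_map.
  rewrite (_ : \prod_(j <- iota 0 6) interp (lam (preN (t (inord j)))) =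
               \prod_(j < 6) interp (lam (preN (t (inord j))))); last first.
    by rewrite -(big_mkord xpredT (fun j => interp (lam (preN (t (inord j)))))).
  by apply: eq_bigr => p _; rewrite inord_val Hl inordK.
rewrite Hprod /tscale (uniqW Hw s) Hs (uniqW Hw t).
case: (C3P Hc (tup_valid t)) => [[-> ->]|[ks [k [-> -> E]]]].
  by rewrite !mul0r mulr0.
move: E => /interp_meq; rewrite !interp_mul => E.
by rewrite mulrAC E mulrA.
Qed.

Lemma preR_lt n : (preR n < 6)%N. Proof. by case: n => [|[|[|[|[|[|n]]]]]]. Qed.
Lemma preS_lt n : (preS n < 6)%N. Proof. by case: n => [|[|[|[|[|[|n]]]]]]. Qed.

Lemma pre_r_ok (j g : gen) : ((img_r C j).2 == g) = (j == inord (preR g)).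
Proof.
rewrite -!(inj_eq val_inj) /= inordK ?preR_lt //.
case: j => [j hj] /=; case: g => [g hg] /=.
case: j hj => [|[|[|[|[|[|j]]]]]] hj //=; rewrite inordK //;
case: g hg => [|[|[|[|[|[|g]]]]]] hg //.
Qed.

Lemma pre_s_ok (j g : gen) : ((img_s C j).2 == g) = (j == inord (preS g)).
Proof.
rewrite -!(inj_eq val_inj) /= inordK ?preS_lt //.
case: j => [j hj] /=; case: g => [g hg] /=.
case: j hj => [|[|[|[|[|[|j]]]]]] hj //=; rewrite inordK //;
case: g hg => [|[|[|[|[|[|g]]]]]] hg //.
Qed.

Lemma lam_r_ok (j : gen) : (img_r C j).1 = interp (lamR j).
Proof.
case: j => [j hj] /=.
by case: j hj => [|[|[|[|[|[|j]]]]]] hj //=; rewrite interpE /= ?expr0z ?expr1z ?sqrCi ?i3 ?expr1 ?expr0; ring.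
Qed.

Lemma lam_s_ok (j : gen) : (img_s C j).1 = interp (lamS j).
Proof.
case: j => [j hj] /=.
by case: j hj => [|[|[|[|[|[|j]]]]]] hj //=; rewrite interpE /= ?expr0z ?expr1z ?sqrCi ?i3 ?expr1 ?expr0; ring.
Qed.

Lemma act_el_r f : act_el gr f = act (lin_of (img_r C)) f.
Proof. by []. Qed.
Lemma act_el_s f : act_el gs f = act (lin_of (img_s C)) f.
Proof. by []. Qed.

Lemma interp_cR : interp cR = - (al * be * ga).
Proof. rewrite interpE /= ?expr0z ?sqrCi ?expr1 ?expr0; ring. Qed.
Lemma interp_cS : interp cS = - (be * ga).
Proof. rewrite interpE /= ?expr0z ?sqrCi ?expr1 ?expr0; ring. Qed.

Lemma part3 w : superpot_space (B_rels al be ga u1 u2 u3 u4) w ->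
  act_el gr w = tscale (- (al * be * ga)) w /\ act_el gs w = tscale (- (be * ga)) w.
Proof.
move=> Hw; split.
  by rewrite act_el_r -interp_cR (eigen Hw pre_r_ok lam_r_ok preR_lt C3r_ok).
by rewrite act_el_s -interp_cS (eigen Hw pre_s_ok lam_s_ok preS_lt C3s_ok).
Qed.

End Main.

Local Open Scope ring_scope.

Lemma tscale1 (C : numClosedFieldType) (f : tensor C) : tscale 1 f = f.
Proof. by apply: functional_extensionality => t; rewrite /tscale mul1r. Qed.

Lemma act_zero (C : numClosedFieldType) M : act M (tzero C) = tzero C.
Proof.
apply: functional_extensionality => t; rewrite /act /tzero.
by apply: big1 => s _; rewrite mul0r.
Qed.

Lemma iter_fix T (F : T -> T) x n : F x = x -> iter n F x = x.
Proof. by move=> H; elim: n => //= n ->. Qed.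

Lemma neq1m1 (C : numClosedFieldType) : (1 : C) <> -1.
Proof.
move/eqP; rewrite -subr_eq0 opprK (_ : 1 + 1 = 2%:R) //.
by rewrite pnatr_eq0.
Qed.

Theorem mainTheorem8 (C : numClosedFieldType) (al be ga u1 u2 u3 u4 : C) :
  (al = 1 \/ al = -1) -> (be = 1 \/ be = -1) -> (ga = 1 \/ ga = -1) ->
  u1 != 0 -> u2 != 0 -> u3 != 0 -> u4 != 0 ->
  let W := superpot_space (B_rels al be ga u1 u2 u3 u4) in
  (* W is nonzero, so hdet_B is the character of D(D_4) on W *)
  (exists w, W w /\ w <> tzero C) /\
  (* hdet_B(phi_g) = delta_{g,e} *)
  (forall w, W w -> forall g : grp, proj g w = if g == ge then w else tzero C) /\
  (* hdet_B(r) = - al be ga,  hdet_B(s) = - be ga *)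
  (forall w, W w ->
     act_el gr w = tscale (- (al * be * ga)) w /\
     act_el gs w = tscale (- (be * ga)) w) /\
  (* hdet_B = counit  iff  al = 1 and be = - ga *)
  ((forall w, W w -> forall g h : grp,
       dact g h w = if g == ge then w else tzero C) <->
   (al = 1 /\ be = - ga)).
Proof.
move=> hal hbe hga hu1 hu2 hu3 hu4 W.
have Hw0 := w0_in hal hbe hga hu1 hu2 hu3 hu4.
have P2 := part2 hal hbe hga hu1 hu2 hu3 hu4.
have P3 := part3 hal hbe hga hu1 hu2 hu3 hu4.
have hb2 := sq1 hbe; have hg2 := sq1 hga.
have L0 : w0 al be ga u1 u2 u3 u4 (word_of l0) = 1 by apply: w0_l0.
split.
  exists (w0 al be ga u1 u2 u3 u4); split => // E.
  have := L0; rewrite E /tzero => /esym/eqP.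
  by rewrite oner_eq0.
split; first exact: P2.
split; first exact: P3.
split.
  move=> H.
  have Hr := H _ Hw0 ge gr; have Hs := H _ Hw0 ge gs.
  rewrite eqxx /dact P2 // eqxx in Hr Hs.
  have [Er Es] := P3 _ Hw0.
  rewrite Er in Hr; rewrite Es in Hs.
  have e1 := congr1 (fun f => f (word_of l0)) Hr.
  have e2 := congr1 (fun f => f (word_of l0)) Hs.
  rewrite /tscale /= L0 mulr1 in e1 e2.
  rewrite ?mulr1 in e1 e2.
  have E1 : al * be * ga = -1 by rewrite -[al * be * ga]opprK e1.
  have E2 : be * ga = -1 by rewrite -[be * ga]opprK e2.
  split.
    have -> : al = (al * be * ga) * (be * ga).
      rewrite (_ : (al * be * ga) * (be * ga) = al * be ^+ 2 * ga ^+ 2); last by ring.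
      by rewrite hb2 hg2 !mulr1.
    by rewrite E1 E2 mulrNN mulr1.
  have -> : be = (be * ga) * ga.
    by rewrite -mulrA -expr2 hg2 mulr1.
  by rewrite E2 mulN1r.
case=> ha hb w Hw g h.
have [Er Es] := P3 _ Hw.
have Hr : act (lin_of (img_r C)) w = w.
  rewrite -act_el_r Er ha hb (_ : - (1 * - ga * ga) = ga ^+ 2); last by ring.
  by rewrite hg2 tscale1.
have Hs : act (lin_of (img_s C)) w = w.
  rewrite -act_el_s Es hb (_ : - (- ga * ga) = ga ^+ 2); last by ring.
  by rewrite hg2 tscale1.
rewrite /dact P2 //; case: (g == ge).
  by rewrite /act_el !iter_fix.
by rewrite /act_el !iter_fix // act_zero.
Qed.
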